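(* Let $m,n,s,k$ be even integers such that $2\leqslant s\leqslant n$, $2\leqslant k\leqslant m$ and $ms=nk$, and let $c\geqslant 1$. For every abelian group $\Gamma$ of order $nkc$ there exists an $\mathrm{MRS}_\Gamma(m,n;s,k;c)$.
   Context: For positive integers $m,n,s,k,c$ and an abelian group $\Gamma$ of order $nkc$, an $\mathrm{MRS}_\Gamma(m,n;s,k;c)$ is a set of $c$ partially filled $m\times n$ arrays (some cells may be empty) with entries in $\Gamma$ such that: every element of $\Gamma$ appears exactly once and in a unique array; in every array each row contains exactly $s$ filled cells and each column contains exactly $k$ filled cells; and there exist $\omega,\delta\in\Gamma$ such that in every array each row sum is $\omega$ and each column sum is $\delta$. *)

(* Defs.v *)
From mathcomp Require Import all_boot all_order all_algebra.
Set Implicit Arguments. Unset Strict Implicit. Unset Printing Implicit Defensive.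
Import GRing.Theory.
Local Open Scope ring_scope.

(* A family of c partially filled m x n arrays with entries in G:
   A t i j = Some g  means cell (i,j) of array t is filled with g,
   A t i j = None    means the cell is empty. *)
Definition arrays (G : Type) (m n c : nat) := 'I_c -> 'I_m -> 'I_n -> option G.

(* entry value, 0 for empty cells (so sums range over filled cells) *)
Definition val0 (G : zmodType) (x : option G) : G := if x is Some g then g else 0.

Definition is_MRS (G : finZmodType) (m n s k c : nat) (A : arrays G m n c) : Prop :=
  (forall g : G, #|[set p : 'I_c * 'I_m * 'I_n | A p.1.1 p.1.2 p.2 == Some g]| = 1%N)
  /\ (forall (t : 'I_c) (i : 'I_m), #|[set j : 'I_n | A t i j != None]| = s)
  /\ (forall (t : 'I_c) (j : 'I_n), #|[set i : 'I_m | A t i j != None]| = k)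
  /\ exists omega delta : G,
       (forall (t : 'I_c) (i : 'I_m), \sum_(j : 'I_n) val0 (A t i j) = omega)
    /\ (forall (t : 'I_c) (j : 'I_n), \sum_(i : 'I_m) val0 (A t i j) = delta).

Definition MRS_exists (G : finZmodType) (m n s k c : nat) : Prop :=
  #|G| = (n * k * c)%N /\ exists A : arrays G m n c, @is_MRS G m n s k c A.

(* Main.v *)
Require Import Defs.
From mathcomp Require Import all_boot all_order all_algebra.
From mathcomp Require Import all_fingroup all_solvable.
From mathcomp Require Import zify ring.
Set Implicit Arguments. Unset Strict Implicit. Unset Printing Implicit Defensive.
Import GRing.Theory.

Lemma exists_d_alpha (G : finZmodType) : (4 %| #|G|)%N ->
  exists d a : G, [/\ d != 0, d + d = 0, forall x, x + x != a & forall x, x + x + d != a]%R.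
Proof.
move=> H4.
pose gT : finGroupType := G.
pose f := fun x : gT => (x * x)%g.
have fM : {in [set: gT] &, {morph f : x y / (x * y)%g}}.
  move=> x y _ _; rewrite /f -!mulgA; congr (_ * _)%g.
  by rewrite mulgA (FinRing.zmod_mulgC y x) -mulgA.
pose ff := @Morphism gT gT [set: gT] f fM.
pose I := (ff @* [set: gT])%G.
pose K := ('ker ff)%G.
have cardIK : (#|K| * #|I| = #|G|)%N.
  rewrite /I card_morphim setIid.
  by rewrite (Lagrange (subsetT K)) cardsT.
have fI : forall x : gT, f x \in I.
  by move=> x; apply: mem_morphim; rewrite inE.
have H2G : (2 %| #|[set: gT]|)%N.
  by rewrite cardsT; apply: dvdn_trans H4; rewrite (dvdn_trans (dvdn_mull 2 (dvdnn 2))).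
have I0 : (0 < #|I|)%N by apply/card_gt0P; exists 1%g; apply: group1.
have order2 : forall x : gT, #[x]%g = 2 -> (x : G) != 0%R /\ ((x : G) + x = 0)%R.
  move=> x ox; split.
    by rewrite -[0%R]/(1%g : gT) -order_gt1 ox.
  by have := expg_order x; rewrite ox.
case: (boolP (2 %| #|I|)%N) => [HI|HI].
- have [d dI od] := Cauchy (isT : prime 2) HI.
  have [e _ oe] := Cauchy (isT : prime 2) H2G.
  have [e0 ee] := order2 e oe.
  have [d0 dd] := order2 d od.
  have eK : e \in K.
    apply/kerP; first by rewrite inE.
    by rewrite /= /f; exact: ee.
  have K2 : (2 <= #|K|)%N.
    have c2 : #|[set (1%g : gT); e]| = 2 by rewrite cards2 eq_sym e0.
    rewrite -c2; apply: subset_leq_card.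
    by apply/subsetP=> z /set2P[]->; [exact: group1 | exact: eK].
  have ltI : (#|I| < #|[set: gT]|)%N.
    rewrite cardsT -cardIK -{1}(mul1n #|I|) ltn_pmul2r //.
  have : ~~ ([set: gT] \subset I).
    by apply: contraL ltI => /subset_leq_card; rewrite leqNgt.
  case/subsetPn => a _ aI.
  have [y _ dy] : exists2 y, y \in [set: gT] & d = f y.
    by move/morphimP: dI => [y yD _ ->]; exists y.
  exists d, a; split => //.
  + by move=> x; apply: contraNneq aI => <-; exact: fI x.
  + move=> x; apply: contraNneq aI => <-.
    have -> : ((x : G) + x + d)%R = f (x * y)%g by rewrite dy fM ?inE.
    exact: fI.
- have cop : coprime 4 #|I|.
    have -> : 4 = (2 ^ 2)%N by [].
    by rewrite coprime_pexpl // coprime2n -(negbK (odd _)) -dvdn2.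
  have H4K : (4 %| #|K|)%N by rewrite -(Gauss_dvdl _ cop) cardIK.
  have H2K : (2 %| #|K|)%N by apply: dvdn_trans H4K; rewrite (dvdn_trans (dvdn_mull 2 (dvdnn 2))).
  have [d dK od] := Cauchy (isT : prime 2) H2K.
  have [d0 dd] := order2 d od.
  pose B := I :|: [set (z * d)%g | z in I].
  have ltB : (#|B| < #|[set: gT]|)%N.
    apply: (leq_ltn_trans (leq_card_setU _ _)).
    apply: (@leq_ltn_trans (#|I| + #|I|)); first by rewrite leq_add2l leq_imset_card.
    rewrite cardsT -cardIK.
    have : (4 <= #|K|)%N by apply: dvdn_leq; rewrite ?cardG_gt0.
    move=> h; rewrite addnn -mul2n ltn_pmul2r //.
    by apply: leq_trans h.
  have : ~~ ([set: gT] \subset B).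
    by apply: contraL ltB => /subset_leq_card; rewrite leqNgt.
  case/subsetPn => a _ aB.
  exists d, a; split => //.
  + by move=> x; apply: contraNneq aB => <-; rewrite inE fI.
  + move=> x; apply: contraNneq aB => <-; rewrite inE; apply/orP; right.
    by apply/imsetP; exists (f x) => //; exact: fI.
Qed.

Lemma card_bij N b (f : nat -> nat) (P : pred nat) :
  (forall x y, (x < b)%N -> (y < b)%N -> f x = f y -> x = y) ->
  (forall x, (x < b)%N -> (f x < N)%N /\ P (f x)) ->
  (forall w, (w < N)%N -> P w -> exists2 x, (x < b)%N & w = f x) ->
  #|[set w : 'I_N | P w]| = b.
Proof.
move=> finj fP fsurj.
case: b finj fP fsurj => [|b'] finj fP fsurj.
  apply/eqP; rewrite cards_eq0; apply/eqP/setP => w; rewrite !inE.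
  apply/negbTE/negP => Pw; by have [x] := fsurj w (ltn_ord w) Pw.
have [N0 _] := fP 0%N isT.
pose w0 : 'I_N := Ordinal N0.
pose g := fun x : 'I_b'.+1 => insubd w0 (f x).
have gE : forall x : 'I_b'.+1, val (g x) = f x.
  by move=> x; rewrite /g insubdK //; case: (fP x (ltn_ord x)).
have -> : [set w : 'I_N | P w] = g @: setT.
  apply/setP => w; rewrite inE; apply/idP/imsetP.
    move=> Pw; have [x xb wx] := fsurj w (ltn_ord w) Pw.
    by exists (Ordinal xb) => //; apply: val_inj; rewrite gE.
  by case=> x _ ->; rewrite gE; case: (fP x (ltn_ord x)).
rewrite card_imset ?cardsT ?card_ord //.
by move=> x y; move/(congr1 val); rewrite !gE => /finj h; apply: val_inj; apply: h.
Qed.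

Lemma big_pair (R : Type) (idx : R) (op : Monoid.law idx) n (F : nat -> R) :
  \big[op/idx]_(j < n.*2) F j = \big[op/idx]_(j < n) op (F j.*2) (F j.*2.+1).
Proof.
elim: n => [|n IH]; first by rewrite !big_ord0.
rewrite doubleS !big_ord_recr /= IH.
by rewrite Monoid.mulmA.
Qed.

Lemma card_sum N (Q : pred nat) : #|[set j : 'I_N | Q j]| = (\sum_(j < N) (Q j : nat))%N.
Proof.
rewrite -sum1_card big_mkcond /=; apply: eq_bigr => j _; rewrite inE.
by case: (Q j).
Qed.

Lemma card_pair n (P : pred nat) :
  #|[set j : 'I_n.*2 | P j./2]| = (#|[set j : 'I_n | P j]|).*2.
Proof.
rewrite (card_sum _ (fun j => P j./2)) (card_sum _ P) /= (@big_pair nat 0%N addn _ (fun j => (P j./2 : nat))) -addnn -big_split /=.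
apply: eq_bigr => j _.
by rewrite doubleK /= uphalf_double.
Qed.

Lemma modinj n a x y : (x < n)%N -> (y < n)%N -> (a + x) %% n = (a + y) %% n -> x = y.
Proof.
move=> xn yn /eqP; rewrite eqn_modDl => /eqP.
by rewrite !modn_small.
Qed.

Section Main.
Variable G : finZmodType.
Variables (m' n' s' k' c : nat).
Variables d al : G.
Hypothesis s0 : (0 < s')%N.
Hypothesis sn : (s' <= n')%N.
Hypothesis msnk : (m' * s' = n' * k')%N.
Hypothesis cardG : #|G| = (4 * (c * (n' * k')))%N.

Open Scope ring_scope.

Hypothesis d0 : d != 0%R.
Hypothesis dd : (d + d = 0)%R.
Hypothesis ha1 : forall x : G, (x + x != al)%R.
Hypothesis ha2 : forall x : G, (x + x + d != al)%R.

Lemma dN : - d = d.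
Proof. by apply/eqP; rewrite eq_sym -addr_eq0 dd. Qed.

Definition Kin (x : G) := (x == 0) || (x == d).
Lemma K0 : Kin 0. Proof. by rewrite /Kin eqxx. Qed.
Lemma KB x y : Kin x -> Kin y -> Kin (x - y).
Proof.
by case/orP=> /eqP ->; case/orP=> /eqP ->; rewrite /Kin ?subrr ?subr0 ?sub0r ?dN eqxx ?orbT.
Qed.
Lemma KN x : Kin x -> Kin (- x).
Proof. by move=> h; rewrite -sub0r; apply: KB K0 h. Qed.
Lemma KD x y : Kin x -> Kin y -> Kin (x + y).
Proof. by move=> hx hy; rewrite -(opprK y); apply: KB hx (KN hy). Qed.

Definition R (x y : G) := Kin (y - x) || Kin (x + y - al).
Lemma R_refl x : R x x. Proof. by rewrite /R subrr K0. Qed.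
Lemma R_sym x y : R x y -> R y x.
Proof.
rewrite /R; case/orP => h; apply/orP; [left | right].
  by rewrite -opprB; apply: KN.
by rewrite (addrC y x).
Qed.
Lemma R_trans x y z : R x y -> R y z -> R x z.
Proof.
rewrite /R => /orP[] h1 /orP[] h2; apply/orP.
- left; have -> : z - x = (z - y) + (y - x) by rewrite addrA subrK.
  exact: KD.
- right; have -> : x + z - al = (y + z - al) - (y - x).
    by symmetry; rewrite opprB addrC -[y + z - al]addrA subrKA addrA.
  exact: KB.
- right; have -> : x + z - al = (x + y - al) + (z - y).
    by symmetry; rewrite addrAC -(addrA x y) subrKC.
  exact: KD.
- left; have -> : z - x = (y + z - al) - (x + y - al).
    by symmetry; rewrite opprB addrA subrK (addrC y z) (addrC x y) addrKA.
  exact: KB.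
Qed.

Definition v (p : G) (a b : bool) : G :=
  match a, b with
  | false, false => p
  | false, true => al - p
  | true, false => al + d - p
  | true, true => p + d
  end.

Lemma Rv p a b : R p (v p a b).
Proof.
rewrite /R; apply/orP; case: a; case: b => /=.
- by left; rewrite (addrC p) addrK /Kin eqxx orbT.
- by right; rewrite (addrC p) subrK (addrC al) addrK /Kin eqxx orbT.
- by right; rewrite (addrC p) subrK subrr K0.
- by left; rewrite subrr K0.
Qed.

Lemma vR p y : R p y -> exists a b, y = v p a b.
Proof.
rewrite /R; case/orP => /orP[] /eqP h.
- by exists false, false => /=; apply/eqP; rewrite -subr_eq0 h.
- by exists true, true => /=; apply/eqP; rewrite addrC -subr_eq h.
- exists false, true => /=; apply/eqP; move/subr0_eq: h => h.
  by rewrite -h (addrC p y) addrK.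
- exists true, false => /=; apply/eqP; move/eqP: h; rewrite subr_eq => /eqP h.
  by rewrite (addrC al d) -h (addrC p y) addrK.
Qed.

Lemma v_inj p a b a' b' : v p a b = v p a' b' -> a = a' /\ b = b'.
Proof.
have n1 : forall q, q != al - q.
  by move=> q; apply: contra (ha1 q) => /eqP h; rewrite {2}h subrKC.
have n2 : forall q, q != al + d - q.
  move=> q; apply: contra (ha2 q) => /eqP h; rewrite {2}h subrKC.
  by rewrite -addrA dd addr0.
have n3 : forall q, q != q + d.
  move=> q; apply: contra d0 => /eqP h.
  by have := addrI q (etrans (addr0 q) h) => <-.
have n4 : forall q, al - q != al + d - q.
  move=> q; apply: contra d0 => /eqP h.
  have h2 := addIr (- q) h.
  by have := addrI al (etrans (addr0 al) h2) => <-.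
have n5 : forall q, al - q != q + d.
  by move=> q; apply: contra (ha2 q) => /eqP h; rewrite -(subrK q al) h addrAC.
have n6 : forall q, al + d - q != q + d.
  move=> q; apply: contra (ha1 q) => /eqP h.
  by rewrite -(addrK d al) -(subrK q (al + d)) h addrAC addrK.
move=> h; suff: (a == a') && (b == b') by case/andP => /eqP -> /eqP ->.
move: h; case: a; case: b; case: a'; case: b' => //= /eqP; apply: contraLR => _;
  by [apply: n1 | rewrite eq_sym; apply: n1 | apply: n2 | rewrite eq_sym; apply: n2
     | apply: n3 | rewrite eq_sym; apply: n3 | apply: n4 | rewrite eq_sym; apply: n4
     | apply: n5 | rewrite eq_sym; apply: n5 | apply: n6 | rewrite eq_sym; apply: n6].
Qed.

Lemma row_pair p a : v p a false + v p a true = al.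
Proof.
case: a => /=; first by rewrite addrA subrK -addrA dd addr0.
by rewrite subrKC.
Qed.

Lemma col_pair p b : v p false b + v p true b = al + d.
Proof.
case: b => /=; first by rewrite addrA subrK.
by rewrite subrKC.
Qed.


Close Scope ring_scope.

Lemma w_uniq w w' : w %/ s' = w' %/ s' -> w %% n' = w' %% n' -> w = w'.
Proof.
move=> h1 h2.
have e1 := divn_eq w s'; have e2 := divn_eq w' s'.
rewrite e1 e2 h1 in h2.
have := modinj (leq_trans (ltn_pmod w s0) sn) (leq_trans (ltn_pmod w' s0) sn) h2.
by move=> h3; rewrite e1 e2 h1 h3.
Qed.

Definition blk (i1 j1 : nat) : option 'I_(n' * k') :=
  [pick w : 'I_(n' * k') | (w %/ s' == i1) && (w %% n' == j1)].

Lemma blk_some i1 j1 w : blk i1 j1 = Some w -> w %/ s' = i1 /\ w %% n' = j1.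
Proof. by rewrite /blk; case: pickP => // w0 /andP[/eqP h1 /eqP h2] [<-]. Qed.

Lemma blkE i1 j1 : (blk i1 j1 != None) =
   [exists w : 'I_(n' * k'), (w %/ s' == i1) && (w %% n' == j1)].
Proof.
rewrite /blk; case: pickP => [w h | h].
  by apply/esym/existsP; exists w.
by apply/esym/negbTE/existsPn => w; rewrite h.
Qed.

Lemma row_card i1 : (i1 < m')%N -> #|[set j1 : 'I_n' | blk i1 j1 != None]| = s'.
Proof.
move=> im.
have n0 : (0 < n')%N by apply: leq_trans sn.
apply: (@card_bij n' s' (fun x => (i1 * s' + x) %% n') (fun j1 => blk i1 j1 != None)).
- move=> x y xs ys; apply: modinj; exact: leq_trans sn.
- move=> x xs; split; first by rewrite ltn_pmod.
  rewrite blkE; apply/existsP.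
  have wK : (i1 * s' + x < n' * k')%N by rewrite -msnk; nia.
  exists (Ordinal wK) => /=.
  by rewrite divnMDl // divn_small // addn0 !eqxx.
- move=> j1 jn; rewrite blkE => /existsP [w /andP[/eqP h1 /eqP h2]].
  exists (w %% s'); first by rewrite ltn_pmod.
  by rewrite -h2 -h1 -divn_eq.
Qed.

Lemma col_card j1 : (j1 < n')%N -> #|[set i1 : 'I_m' | blk i1 j1 != None]| = k'.
Proof.
move=> jn.
have n0 : (0 < n')%N by apply: leq_trans sn.
have modj : forall q, (j1 + q * n') %% n' = j1.
  by move=> q; rewrite addnC modnMDl modn_small.
apply: (@card_bij m' k' (fun q => (j1 + q * n') %/ s') (fun i1 => blk i1 j1 != None)).
- move=> x y xk yk h.
  have := w_uniq h (etrans (modj x) (esym (modj y))).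
  move/addnI/eqP; rewrite eqn_pmul2r // => /eqP //.
- move=> q qk; split.
    by rewrite ltn_divLR // msnk; nia.
  rewrite blkE; apply/existsP.
  have wK : (j1 + q * n' < n' * k')%N by nia.
  by exists (Ordinal wK) => /=; rewrite modj !eqxx.
- move=> i1 im; rewrite blkE => /existsP [w /andP[/eqP h1 /eqP h2]].
  exists (w %/ n').
    by rewrite ltn_divLR //; have := ltn_ord w; lia.
  have e : (j1 + w %/ n' * n' = w)%N by rewrite addnC -h2 -divn_eq.
  by rewrite e h1.
Qed.


Definition canon (x : G) : G := odflt x [pick y in [set y | R x y]].

Lemma canon_R x : R x (canon x).
Proof.
rewrite /canon; case: pickP => [y|h] /=; first by rewrite inE.
exact: R_refl.
Qed.

Lemma canon_eq x y : R x y -> canon x = canon y.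
Proof.
move=> rxy; rewrite /canon.
have -> : [set z | R x z] = [set z | R y z].
  apply/setP => z; rewrite !inE; apply/idP/idP => h.
    exact: R_trans (R_sym rxy) h.
  exact: R_trans rxy h.
case: pickP => //= h.
by have := h y; rewrite inE R_refl.
Qed.

Definition X := [set x | canon x == x].

Lemma canon_X x : canon x \in X.
Proof. by rewrite inE; apply/eqP/esym/canon_eq/canon_R. Qed.

Lemma X_inj x y : x \in X -> y \in X -> R x y -> x = y.
Proof.
rewrite !inE => /eqP hx /eqP hy rxy.
by rewrite -hx -hy; apply: canon_eq.
Qed.

Lemma cardX : (c * (n' * k') <= #|X|)%N.
Proof.
pose f := fun q : G * (bool * bool) => v q.1 q.2.1 q.2.2.
have : (#|G| <= #|X| * 4)%N.
  rewrite -cardsT.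
  have -> : (#|X| * 4)%N = #|setX X [set: bool * bool]| by rewrite cardsX cardsT card_prod card_bool.
  apply: leq_trans (leq_imset_card f _).
  apply: subset_leq_card; apply/subsetP => g _.
  have [a [b e]] := vR (R_sym (canon_R g)).
  apply/imsetP; exists (canon g, (a, b)); last exact: e.
  by rewrite in_setX canon_X in_setT.
by rewrite cardG; lia.
Qed.

Definition rr (i : nat) : G := nth 0%R (enum X) i.

Definition Anat (t i j : nat) : option G :=
  if blk i./2 j./2 is Some w then Some (v (rr (t * (n' * k') + w)) (odd i) (odd j)) else None.

Definition A : arrays G (m'.*2) (n'.*2) c := fun t i j => Anat t i j.

Lemma AnatE t i j : (Anat t i j != None) = (blk i./2 j./2 != None).
Proof. by rewrite /Anat; case: blk. Qed.

Lemma row_cnt (t : 'I_c) (i : 'I_(m'.*2)) : #|[set j : 'I_(n'.*2) | A t i j != None]| = s'.*2.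
Proof.
rewrite /A.
have -> : [set j : 'I_(n'.*2) | Anat t i j != None] = [set j : 'I_(n'.*2) | (fun j1 => blk i./2 j1 != None) j./2].
  by apply/setP => j; rewrite !inE AnatE.
rewrite (card_pair _ (fun j1 => blk i./2 j1 != None)) row_card //.
by rewrite ltn_half_double.
Qed.

Lemma col_cnt (t : 'I_c) (j : 'I_(n'.*2)) : #|[set i : 'I_(m'.*2) | A t i j != None]| = k'.*2.
Proof.
rewrite /A.
have -> : [set i : 'I_(m'.*2) | Anat t i j != None] = [set i : 'I_(m'.*2) | (fun i1 => blk i1 j./2 != None) i./2].
  by apply/setP => i; rewrite !inE AnatE.
rewrite (card_pair _ (fun i1 => blk i1 j./2 != None)) col_card //.
by rewrite ltn_half_double.
Qed.
Lemma row_sum (t : 'I_c) (i : 'I_(m'.*2)) :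
  (\sum_(j : 'I_(n'.*2)) val0 (A t i j) = al *+ s')%R.
Proof.
rewrite /A (@big_pair G 0%R +%R _ (fun j => val0 (Anat t i j))).
rewrite (eq_bigr (fun j1 : 'I_n' => al *+ (blk i./2 j1 != None))%R); last first.
  move=> j1 _; rewrite /Anat doubleK /= uphalf_double odd_double /=.
  by case: blk => [w|] /=; [rewrite row_pair | rewrite addr0].
rewrite sumrMnr -(card_sum _ (fun j1 => blk i./2 j1 != None)) row_card //.
by rewrite ltn_half_double.
Qed.

Lemma col_sum (t : 'I_c) (j : 'I_(n'.*2)) :
  (\sum_(i : 'I_(m'.*2)) val0 (A t i j) = (al + d) *+ k')%R.
Proof.
rewrite /A (@big_pair G 0%R +%R _ (fun i => val0 (Anat t i j))).
rewrite (eq_bigr (fun i1 : 'I_m' => (al + d) *+ (blk i1 j./2 != None))%R); last first.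
  move=> i1 _; rewrite /Anat doubleK /= uphalf_double odd_double /=.
  by case: blk => [w|] /=; [rewrite col_pair | rewrite addr0].
rewrite sumrMnr -(card_sum _ (fun i1 => blk i1 j./2 != None)) col_card //.
by rewrite ltn_half_double.
Qed.
Lemma card_sumT (T : finType) (P : pred T) : #|[set x | P x]| = (\sum_(x : T) (P x : nat))%N.
Proof.
rewrite -sum1_card big_mkcond /=; apply: eq_bigr => x _; rewrite inE.
by case: (P x).
Qed.

Lemma cardF : #|[set p : 'I_c * 'I_(m'.*2) * 'I_(n'.*2) | A p.1.1 p.1.2 p.2 != None]|
   = (c * m'.*2 * s'.*2)%N.
Proof.
rewrite (card_sumT (fun p : 'I_c * 'I_(m'.*2) * 'I_(n'.*2) => A p.1.1 p.1.2 p.2 != None)).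
rewrite -(pair_bigA _ (fun (tu : 'I_c * 'I_(m'.*2)) (j : 'I_(n'.*2)) => (A tu.1 tu.2 j != None : nat))) /=.
rewrite -(pair_bigA _ (fun (t : 'I_c) (i : 'I_(m'.*2)) => \sum_(j : 'I_(n'.*2)) (A t i j != None : nat))%N) /=.
rewrite (eq_bigr (fun _ => m'.*2 * s'.*2)%N).
  by rewrite big_const_ord iter_addn_0 ?card_ord; lia.
move=> t _; rewrite (eq_bigr (fun _ => s'.*2)%N).
  by rewrite big_const_ord iter_addn_0 ?card_ord; lia.
move=> i _; rewrite -(card_sumT (fun j => A t i j != None)).
exact: row_cnt.
Qed.

Lemma A_inj (t t' : 'I_c) (i i' : 'I_(m'.*2)) (j j' : 'I_(n'.*2)) :
  A t i j != None -> A t i j = A t' i' j' -> (t, i, j) = (t', i', j').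
Proof.
rewrite /A /Anat.
case E: (blk i./2 j./2) => [w|] // _.
case E': (blk i'./2 j'./2) => [w'|] // [h].
have [hw1 hw2] := blk_some E; have [hw1' hw2'] := blk_some E'.
have Kp : (0 < n' * k')%N by apply: leq_ltn_trans (leq0n w) (ltn_ord w).
have bnd : forall (t0 : 'I_c) (w0 : 'I_(n' * k')), (t0 * (n' * k') + w0 < #|X|)%N.
  move=> t0 w0; apply: leq_trans cardX.
  have := ltn_ord t0; have := ltn_ord w0; nia.
have rX : forall (t0 : 'I_c) (w0 : 'I_(n' * k')), rr (t0 * (n' * k') + w0) \in X.
  by move=> t0 w0; rewrite /rr -mem_enum; apply: mem_nth; rewrite -cardE.
have er : rr (t * (n' * k') + w) = rr (t' * (n' * k') + w').
  apply: X_inj (rX _ _) (rX _ _) _.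
  apply: R_trans (Rv _ (odd i) (odd j)) _; rewrite h; apply: R_sym; exact: Rv.
have [ei ej] := v_inj (etrans h (congr1 (fun r => v r (odd i') (odd j')) (esym er))).
have eidx : (t * (n' * k') + w = t' * (n' * k') + w')%N.
  apply/eqP; move: er; rewrite /rr => /eqP.
  by rewrite nth_uniq ?enum_uniq // -?cardE ?bnd.
have et : t = t' :> nat.
  have := congr1 (divn^~ (n' * k')) eidx.
  by rewrite !divnMDl // !divn_small // !addn0.
have ew : w = w' :> nat by move: eidx; rewrite et => /addnI.
have ei2 : i./2 = i'./2 by rewrite -hw1 -hw1' ew.
have ej2 : j./2 = j'./2 by rewrite -hw2 -hw2' ew.
have -> : t = t' by apply: val_inj.
have -> : i = i'.
  by apply: val_inj; rewrite /= -[nat_of_ord i]odd_double_half -[nat_of_ord i']odd_double_half ei ei2.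
have -> : j = j'.
  by apply: val_inj; rewrite /= -[nat_of_ord j]odd_double_half -[nat_of_ord j']odd_double_half ej ej2.
by [].
Qed.
Lemma construction : @is_MRS G (m'.*2) (n'.*2) (s'.*2) (k'.*2) c A.
Proof.
split; [|split; [|split]].
- move=> g.
  pose F := [set p : 'I_c * 'I_(m'.*2) * 'I_(n'.*2) | A p.1.1 p.1.2 p.2 != None].
  pose val' := fun p : 'I_c * 'I_(m'.*2) * 'I_(n'.*2) => val0 (A p.1.1 p.1.2 p.2).
  have AE : forall p, p \in F -> A p.1.1 p.1.2 p.2 = Some (val' p).
    by move=> p; rewrite inE /val'; case: (A _ _ _).
  have vinj : {in F &, injective val'}.
    move=> [[t i] j] [[t' i'] j'] hp hq e.
    apply: A_inj; first by move: hp; rewrite inE.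
    by rewrite (AE _ hp) (AE _ hq) e.
  have cF : #|F| = #|G|.
    rewrite cardF cardG -!muln2.
    have : (c * (m' * 2) * (s' * 2) = 4 * (c * (m' * s')))%N by ring.
    by move=> ->; rewrite msnk.
  have im : val' @: F = [set: G].
    by apply/eqP; rewrite eqEcard subsetT cardsT (card_in_imset vinj) cF leqnn.
  have : g \in val' @: F by rewrite im inE.
  case/imsetP => p pF gp.
  have -> : [set q : 'I_c * 'I_(m'.*2) * 'I_(n'.*2) | A q.1.1 q.1.2 q.2 == Some g] = [set p].
    apply/setP => q; rewrite !inE; apply/eqP/eqP => [hq | ->].
      have qF : q \in F by rewrite inE hq.
      by apply: vinj => //; rewrite -gp /val' hq.
    by rewrite (AE _ pF) gp.
  exact: cards1.
- exact: row_cnt.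
- exact: col_cnt.
- exists (al *+ s')%R, ((al + d) *+ k')%R; split; [exact: row_sum | exact: col_sum].
Qed.

End Main.

Theorem proposition5p10 (m n s k c : nat) :
  ~~ odd m -> ~~ odd n -> ~~ odd s -> ~~ odd k ->
  (2 <= s <= n)%N -> (2 <= k <= m)%N -> (m * s = n * k)%N -> (1 <= c)%N ->
  forall G : finZmodType, #|G| = (n * k * c)%N -> MRS_exists G m n s k c.
Proof.
move=> hm hn hs hk /andP[s2 sn] _ ms _ G cG.
split=> //.
have e2 : forall x, ~~ odd x -> x = x./2.*2.
  by move=> x hx; rewrite -{1}(odd_double_half x) (negbTE hx).
move: (e2 m hm) (e2 n hn) (e2 s hs) (e2 k hk).
set m' := m./2; set n' := n./2; set s' := s./2; set k' := k./2.
move=> em en es ek.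
rewrite em en es ek in ms cG s2 sn *.
have H4 : (4 %| #|G|)%N.
  rewrite cG -!muln2; apply/dvdnP; exists (n' * k' * c)%N; ring.
have [d [al [d0 dd h1 h2]]] := exists_d_alpha H4.
eexists.
apply: construction => //.
- by rewrite -(leq_pmul2l (isT : (0 < 2)%N)) !mul2n.
- by rewrite -leq_double.
- by move: ms; rewrite -!muln2; lia.
- by rewrite cG -!muln2; ring.
all: try eassumption.
Qed.
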